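(* Let $0\le a<b<1$ and let $\varrho\ge0$ be a function on $[a,b]$ such that $\varrho/\zeta$ is non-decreasing and bounded on $[a,b]$. Then (i) $$\big(b\zeta(b)-a\zeta(a)\big)\,\hat m(\varrho/\zeta,a,b)\le 2+a\widetilde\varrho(a+)+b\widetilde\varrho(b-),$$ and (ii) equality holds in (i) if and only if $\varrho\equiv0$ on $[a,b)$.
   Context: $\zeta(t)=\frac{2}{1-t^2}$, $\hat\varrho(t)=t\zeta(t)$ (so $\hat\varrho=\zeta'/\zeta$), and $\widetilde\varrho=\hat\varrho+\varrho$; $\widetilde\varrho(a+)=a\zeta(a)+\lim_{t\downarrow a}\varrho(t)$ and $\widetilde\varrho(b-)=b\zeta(b)+\lim_{t\uparrow b}\varrho(t)$. With $h$ a primitive of $\varrho$, $\psi=e^h$, $\mathtt f(x)=x\zeta(x)^2\psi(x)$, $\mathtt g(x)=x\zeta(x)\psi(x)$, define $\hat m(\varrho/\zeta,a,b):=\frac{\mathtt g(a)+\mathtt g(b)}{\int_a^b\mathtt f\,dt}$. *)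

(* Defs.v *)
From Stdlib Require Import Reals Lra ClassicalEpsilon.
Open Scope R_scope.

Definition zeta (t : R) : R := 2 / (1 - t ^ 2).

(* hat rho (t) = t zeta(t)  (= zeta'/zeta) *)
Definition rho_hat (t : R) : R := t * zeta t.

(* Total Riemann integral: the value of the Riemann integral of f over [a,b]
   when f is Riemann integrable there (chosen by classical epsilon; the value
   does not depend on the integrability proof). *)
Definition RInt (f : R -> R) (a b : R) : R :=
  epsilon (inhabits 0)
    (fun I => exists pr : Riemann_integrable f a b, RiemannInt pr = I).

Definition h_fun (rho : R -> R) (a x : R) : R := RInt rho a x.
Definition psi (rho : R -> R) (a x : R) : R := exp (h_fun rho a x).

Definition f_fun (rho : R -> R) (a x : R) : R := x * (zeta x) ^ 2 * psi rho a x.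
Definition g_fun (rho : R -> R) (a x : R) : R := x * zeta x * psi rho a x.

(* hat m(rho/zeta, a, b) = (g(a)+g(b)) / int_a^b f *)
Definition m_hat (rho : R -> R) (a b : R) : R :=
  (g_fun rho a a + g_fun rho a b) / RInt (f_fun rho a) a b.

Definition right_lim (f : R -> R) (x l : R) : Prop :=
  forall eps, 0 < eps -> exists delta, 0 < delta /\
    forall t, x < t < x + delta -> Rabs (f t - l) < eps.
Definition left_lim (f : R -> R) (x l : R) : Prop :=
  forall eps, 0 < eps -> exists delta, 0 < delta /\
    forall t, x - delta < t < x -> Rabs (f t - l) < eps.

(* Main.v *)
Require Import Defs.
From Stdlib Require Import Reals Lra Psatz ClassicalEpsilon RList RiemannInt_SF RiemannInt.
From Coquelicot Require Coquelicot.
Open Scope R_scope.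

Definition SF_ext (f g : R -> R) (a b : R) (X : IsStepFun f a b)
  (H : forall x, Rmin a b < x < Rmax a b -> f x = g x) : IsStepFun g a b.
Proof.
  exists (projT1 X). exists (projT1 (projT2 X)).
  destruct X as [l [lf Hc]]; simpl.
  destruct Hc as [H0 [H1 [H2 [H3 H4]]]].
  split; [exact H0|]. split; [exact H1|]. split; [exact H2|]. split; [exact H3|].
  intros i Hi x Hx. rewrite <- (H4 i Hi x Hx). symmetry. apply H.
  destruct Hx as [Hx1 Hx2]. split.
  - apply Rle_lt_trans with (pos_Rl l i); [|exact Hx1].
    rewrite <- H1. apply RList_P5; [exact H0|].
    apply RList_P3. exists i; split; [reflexivity| lia].
  - apply Rlt_le_trans with (pos_Rl l (S i)); [exact Hx2|].
    rewrite <- H2. apply RList_P7; [exact H0|].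
    apply RList_P3. exists (S i); split; [reflexivity| lia].
Defined.

Lemma SF_ext_int (f g : R -> R) (a b : R) (X : IsStepFun f a b) H :
  RiemannInt_SF (mkStepFun (SF_ext f g a b X H)) = RiemannInt_SF (mkStepFun X).
Proof.
  destruct X as [l [lf Hc]]. reflexivity.
Qed.

Definition Approx (f : R -> R) (a b e : R) : Type :=
  {phi : StepFun a b & {psi : StepFun a b |
    (forall t, a <= t <= b -> Rabs (f t - phi t) <= psi t) /\ RiemannInt_SF psi <= e}}.

Lemma Approx_mono f a b e e' : e <= e' -> Approx f a b e -> Approx f a b e'.
Proof.
  intros He [phi [psi [H1 H2]]]. exists phi, psi. split; [exact H1| lra].
Qed.

Lemma Approx_one f a b : a <= b ->
  (forall x y, a <= x -> x <= y -> y <= b -> f x <= f y) ->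
  Approx f a b ((b - a) * (f b - f a)).
Proof.
  intros Hab Hm.
  exists (mkStepFun (StepFun_P4 a b (f a))).
  exists (mkStepFun (StepFun_P4 a b (f b - f a))).
  split.
  - intros t Ht. simpl. unfold fct_cte.
    assert (f a <= f t) by (apply Hm; lra).
    assert (f t <= f b) by (apply Hm; lra).
    rewrite Rabs_right; lra.
  - rewrite StepFun_P18. lra.
Qed.

Lemma Approx_glue f a c b e1 e2 : a <= c -> c <= b ->
  Approx f a c e1 -> Approx f c b e2 -> Approx f a b (e1 + e2).
Proof.
  intros Hac Hcb [phi1 [psi1 [H1 H1']]] [phi2 [psi2 [H2 H2']]].
  set (phi := fun t => if Rle_dec t c then phi1 t else phi2 t).
  set (psi := fun t => if Rle_dec t c then psi1 t else psi2 t).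
  assert (Pa : IsStepFun phi a c).
  { apply (SF_ext phi1 phi a c (pre phi1)). intros x Hx. unfold phi.
    rewrite Rmin_left, Rmax_right in Hx by lra.
    destruct (Rle_dec x c); [reflexivity| lra]. }
  assert (Pb : IsStepFun phi c b).
  { apply (SF_ext phi2 phi c b (pre phi2)). intros x Hx. unfold phi.
    rewrite Rmin_left, Rmax_right in Hx by lra.
    destruct (Rle_dec x c); [lra| reflexivity]. }
  set (Qa := SF_ext psi1 psi a c (pre psi1) (fun x Hx =>
     match Rle_dec x c as s return psi1 x = (if s then psi1 x else psi2 x) with
     | left _ => eq_refl
     | right n => False_ind _ (n (Rlt_le _ _ (Rlt_le_trans _ _ _ (proj2 Hx) (Rmax_lub _ _ _ Hac (Rle_refl c)))))
     end)).
  assert (Qb : forall x, Rmin c b < x < Rmax c b -> psi2 x = psi x).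
  { intros x Hx. unfold psi. rewrite Rmin_left, Rmax_right in Hx by lra.
    destruct (Rle_dec x c); [lra| reflexivity]. }
  set (Qb' := SF_ext psi2 psi c b (pre psi2) Qb).
  exists (mkStepFun (StepFun_P46 Pa Pb)).
  exists (mkStepFun (StepFun_P46 Qa Qb')).
  split.
  - intros t Ht. simpl. unfold phi, psi.
    destruct (Rle_dec t c).
    + apply H1; lra.
    + apply H2; lra.
  - rewrite <- (StepFun_P43 Qa Qb').
    unfold Qa, Qb'. rewrite !SF_ext_int.
    change (RiemannInt_SF (mkStepFun (pre psi1))) with (RiemannInt_SF psi1).
    change (RiemannInt_SF (mkStepFun (pre psi2))) with (RiemannInt_SF psi2).
    lra.
Qed.
Lemma Approx_n f a b del : 0 < del ->
  (forall x y, a <= x -> x <= y -> y <= b -> f x <= f y) ->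
  forall n, forall a', a <= a' <= b -> b - a' <= INR n * del ->
  Approx f a' b (del * (f b - f a')).
Proof.
  intros Hd Hm n. induction n as [|n IH]; intros a' Ha' Hn.
  - simpl in Hn. assert (a' = b) by lra. subst a'.
    apply (Approx_mono f b b ((b-b)*(f b - f b))). lra.
    apply Approx_one; [lra| intros; apply Hm; lra].
  - destruct (Rle_dec (b - a') del) as [Hs|Hs].
    + apply (Approx_mono f a' b ((b-a')*(f b - f a'))).
      { assert (f a' <= f b) by (apply Hm; lra). nra. }
      apply Approx_one; [lra| intros; apply Hm; lra].
    + replace (del * (f b - f a')) with ((a' + del - a') * (f (a'+del) - f a') + del * (f b - f (a' + del))) by ring.
      apply Approx_glue with (a' + del); try lra.
      * apply Approx_one; [lra| intros; apply Hm; lra].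
      * apply IH; [lra|]. rewrite S_INR in Hn. lra.
Qed.

Lemma mono_int f a b : a <= b ->
  (forall x y, a <= x -> x <= y -> y <= b -> f x <= f y) ->
  Riemann_integrable f a b.
Proof.
  intros Hab Hm eps.
  assert (Hfab : f a <= f b) by (apply Hm; lra).
  set (del := eps / (2 * (f b - f a + 1))).
  assert (Hd : 0 < del).
  { unfold del. apply Rdiv_lt_0_compat; [apply cond_pos| lra]. }
  destruct (archimed ((b - a) / del)) as [Hn _].
  assert (Hz : (0 <= up ((b - a) / del))%Z).
  { apply le_IZR. assert (0 <= (b-a)/del) by (unfold Rdiv; apply Rmult_le_pos; [lra| left; apply Rinv_0_lt_compat; lra]). lra. }
  destruct (IZN_var Hz) as [n Hn'].
  assert (Hbn : b - a <= INR n * del).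
  { rewrite Hn' in Hn. rewrite <- INR_IZR_INZ in Hn.
    assert ((b - a) / del * del = b - a) by (field; lra).
    nra. }
  destruct (Approx_n f a b del Hd Hm n a ltac:(lra) Hbn) as [phi [psi [H1 H2]]].
  exists phi, psi. split.
  - rewrite Rmin_left, Rmax_right by lra. exact H1.
  - assert (H0 : 0 <= RiemannInt_SF psi).
    { apply Rle_trans with (RiemannInt_SF (mkStepFun (StepFun_P4 a b 0))).
      { rewrite StepFun_P18; lra. }
      apply StepFun_P37; [lra|]. intros x Hx. simpl. unfold fct_cte.
      apply Rle_trans with (Rabs (f x - phi x)); [apply Rabs_pos| apply H1; lra]. }
    rewrite Rabs_right by lra.
    apply Rle_lt_trans with (del * (f b - f a)); [exact H2|].
    unfold del. apply Rle_lt_trans with (eps / 2 * ((f b - f a)/(f b - f a + 1))).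
    + unfold Rdiv. destruct (Rle_lt_or_eq_dec _ _ Hfab) as [Hlt|Heq].
      * apply Req_le. field. lra.
      * rewrite Heq. replace (f b - f b) with 0 by ring. apply Req_le; ring.
    + pose proof (cond_pos eps).
      assert ((f b - f a) / (f b - f a + 1) <= 1).
      { apply Rmult_le_reg_r with (f b - f a + 1); [lra|].
        unfold Rdiv. rewrite Rmult_assoc, Rinv_l by lra. lra. }
      nra.
Qed.
Lemma RInt_val f a b (pr : Riemann_integrable f a b) : RInt f a b = RiemannInt pr.
Proof.
  unfold RInt.
  destruct (epsilon_spec (inhabits 0) (fun I => exists pr, RiemannInt pr = I)
     (ex_intro _ (RiemannInt pr) (ex_intro _ pr eq_refl))) as [pr' H].
  rewrite <- H. apply RiemannInt_P5.
Qed.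

Lemma RInt_ub f x y c : x <= y -> Riemann_integrable f x y ->
  (forall t, x < t < y -> f t <= c) -> RInt f x y <= c * (y - x).
Proof.
  intros Hxy pr H. rewrite (RInt_val f x y pr).
  rewrite <- (RiemannInt_P15 (RiemannInt_P14 x y c)).
  apply RiemannInt_P19; [exact Hxy|]. intros t Ht. unfold fct_cte. apply H; exact Ht.
Qed.

Lemma RInt_lb f x y c : x <= y -> Riemann_integrable f x y ->
  (forall t, x < t < y -> c <= f t) -> c * (y - x) <= RInt f x y.
Proof.
  intros Hxy pr H. rewrite (RInt_val f x y pr).
  rewrite <- (RiemannInt_P15 (RiemannInt_P14 x y c)).
  apply RiemannInt_P19; [exact Hxy|]. intros t Ht. unfold fct_cte. apply H; exact Ht.
Qed.

Definition mono_on (f : R -> R) a b := forall x y, a <= x -> x <= y -> y <= b -> f x <= f y.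

Lemma mono_sub f a b x y : mono_on f a b -> a <= x -> y <= b -> mono_on f x y.
Proof. intros H Hx Hy u v Hu Huv Hv. apply H; lra. Qed.

Lemma mint_chasles f a b x y : mono_on f a b -> a <= x -> x <= y -> y <= b ->
  RInt f a y = RInt f a x + RInt f x y.
Proof.
  intros Hm Hx Hxy Hy.
  assert (Ha: a <= a) by lra. assert (Hxb : x <= b) by lra. assert (Hay : a <= y) by lra.
  rewrite (RInt_val f a y (mono_int f a y Hay (mono_sub f a b a y Hm Ha Hy))).
  rewrite (RInt_val f a x (mono_int f a x Hx (mono_sub f a b a x Hm Ha Hxb))).
  rewrite (RInt_val f x y (mono_int f x y Hxy (mono_sub f a b x y Hm Hx Hy))).
  symmetry. apply RiemannInt_P26.
Qed.

Lemma mint_int f a b x y : mono_on f a b -> a <= x -> x <= y -> y <= b ->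
  Riemann_integrable f x y.
Proof. intros Hm Hx Hxy Hy. apply mono_int; [lra|]. exact (mono_sub f a b x y Hm Hx Hy). Qed.

Lemma mint_lower f a b x y : mono_on f a b -> a <= x -> x <= y -> y <= b ->
  f x * (y - x) <= RInt f x y.
Proof.
  intros Hm Hx Hxy Hy. apply RInt_lb; [lra| exact (mint_int f a b x y Hm Hx Hxy Hy)|].
  intros t Ht. apply Hm; lra.
Qed.

Lemma RInt_zero f a : RInt f a a = 0.
Proof. rewrite (RInt_val f a a (RiemannInt_P7 f a)). apply RiemannInt_P9. Qed.
Ltac lra2 := repeat split; lra.

Lemma zeta_mul t : -1 < t < 1 -> zeta t * (1 - t ^ 2) = 2.
Proof. intros Ht. unfold zeta. field. nra. Qed.

Lemma zeta_ge2 t : -1 < t < 1 -> 2 <= zeta t.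
Proof.
  intros Ht. pose proof (zeta_mul t Ht).
  assert (0 < 1 - t^2) by nra. assert (1 - t^2 <= 1) by nra.
  assert (0 < zeta t) by nra. nra.
Qed.

Lemma zeta_mono s t : 0 <= s -> s <= t -> t < 1 -> zeta s <= zeta t.
Proof.
  intros H1 H2 H3. pose proof (zeta_mul s ltac:(lra2)). pose proof (zeta_mul t ltac:(lra2)).
  pose proof (zeta_ge2 s ltac:(lra2)). pose proof (zeta_ge2 t ltac:(lra2)).
  assert (s^2 <= t^2) by (simpl; rewrite !Rmult_1_r; apply Rmult_le_compat; lra).
  assert (1 - t^2 <= 1 - s^2) by lra.
  unfold zeta, Rdiv. apply Rmult_le_compat_l; [lra|]. apply Rinv_le_contravar; [nra | lra].
Qed.

Lemma zeta_diff x y : 0 <= x -> x <= y -> y < 1 ->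
  zeta y - zeta x = (y - x) * (x + y) * zeta x * zeta y / 2.
Proof. intros. unfold zeta. field. split; nra. Qed.

Lemma zeta_diff2 x y : 0 <= x -> x <= y -> y < 1 ->
  x * zeta x ^ 2 * (y - x) - (zeta y - zeta x) =
  - (y - x)^2 * (1 + x^2 + 2*x*y) * zeta x ^ 2 * zeta y / 4.
Proof. intros. unfold zeta. field. split; nra. Qed.

Definition Hyp (a b : R) (rho : R -> R) (Lb : R) : Prop :=
  0 <= a /\ a < b /\ b < 1 /\ (forall t, a <= t <= b -> 0 <= rho t) /\
  (forall s t, a <= s -> s <= t -> t <= b -> rho s / zeta s <= rho t / zeta t) /\
  left_lim rho b Lb.

Lemma rho_mono a b rho Lb : Hyp a b rho Lb -> mono_on rho a b.
Proof.
  intros [Ha [Hab [Hb [Hp [Hm _]]]]] x y Hx Hxy Hy.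
  pose proof (Hm x y Hx Hxy Hy).
  pose proof (zeta_ge2 x ltac:(lra2)). pose proof (zeta_ge2 y ltac:(lra2)).
  pose proof (zeta_mono x y ltac:(lra) Hxy ltac:(lra)).
  pose proof (Hp y ltac:(lra)). pose proof (Hp x ltac:(lra)).
  assert (rho y / zeta y * zeta y = rho y) by (field; lra).
  assert (rho x / zeta x * zeta x = rho x) by (field; lra).
  assert (0 <= rho y / zeta y) by (unfold Rdiv; apply Rmult_le_pos; [lra| left; apply Rinv_0_lt_compat; lra]).
  nra.
Qed.

Lemma rho_le_Lb a b rho Lb : Hyp a b rho Lb -> forall t, a <= t < b ->
  rho t <= Lb * zeta t / zeta b.
Proof.
  intros HH t Ht. destruct HH as [Ha [Hab [Hb [Hp [Hm Hl]]]]].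
  pose proof (zeta_ge2 t ltac:(lra2)) as Zt. pose proof (zeta_ge2 b ltac:(lra2)) as Zb.
  set (c := rho t / zeta t).
  assert (Hc : 0 <= c) by (unfold c, Rdiv; apply Rmult_le_pos; [apply Hp; lra| left; apply Rinv_0_lt_compat; lra]).
  assert (Hrt : rho t = c * zeta t) by (unfold c; field; lra).
  cut (c * zeta b <= Lb).
  { intro Hcl. rewrite Hrt. apply Rmult_le_reg_r with (zeta b); [lra|].
    replace (Lb * zeta t / zeta b * zeta b) with (Lb * zeta t) by (field; lra). nra. }
  destruct (Rle_dec (c * zeta b) Lb) as [ok|nok]; [exact ok|].
  exfalso. set (gap := c * zeta b - Lb).
  assert (Hg : 0 < gap) by (unfold gap; lra).
  destruct (Hl (gap/2) ltac:(lra)) as [del [Hd Hdel]].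
  set (eta := Rmin (Rmin del (b - t)) (gap / (2 * (c * (zeta b)^2 + 1)))).
  assert (He : 0 < eta).
  { unfold eta. apply Rmin_pos; [apply Rmin_pos; lra|].
    apply Rdiv_lt_0_compat; [lra|]. assert (0 <= c * (zeta b)^2) by (apply Rmult_le_pos; [lra| apply pow2_ge_0]). lra. }
  set (t' := b - eta / 2).
  assert (Het1 : eta <= del) by (unfold eta; eapply Rle_trans; [apply Rmin_l| apply Rmin_l]).
  assert (Het2 : eta <= b - t) by (unfold eta; eapply Rle_trans; [apply Rmin_l| apply Rmin_r]).
  assert (Het3 : eta <= gap / (2 * (c * (zeta b)^2 + 1))) by (unfold eta; apply Rmin_r).
  assert (Ht' : b - del < t' < b) by (unfold t'; lra).
  specialize (Hdel t' Ht').
  assert (Hrt' : c * zeta t' <= rho t').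
  { assert (c <= rho t' / zeta t') by (apply Hm; unfold t'; lra).
    pose proof (zeta_ge2 t' ltac:(unfold t'; lra2)).
    assert (rho t' / zeta t' * zeta t' = rho t') by (field; lra). nra. }
  pose proof (zeta_diff t' b ltac:(unfold t'; lra) ltac:(unfold t'; lra) Hb) as Hzd.
  pose proof (zeta_ge2 t' ltac:(unfold t'; lra2)).
  pose proof (zeta_mono t' b ltac:(unfold t'; lra) ltac:(unfold t'; lra) Hb).
  assert (Hzb : zeta b - zeta t' <= (eta/2) * (zeta b)^2).
  { rewrite Hzd.  replace (b - t') with (eta/2) by (unfold t'; ring).
    assert (t' + b <= 2) by (unfold t'; lra).
    assert (0 <= t' + b) by (unfold t'; lra).
    assert (zeta t' * (zeta b) <= (zeta b) * (zeta b)) by (apply Rmult_le_compat_r; lra).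
    assert (0 <= zeta t' * (zeta b)) by (apply Rmult_le_pos; lra).
    assert (0 <= eta / 2) by lra.
    replace (eta / 2 * (t' + b) * zeta t' * (zeta b) / 2) with ((eta/2) * ((t'+b)/2) * (zeta t' * (zeta b))) by field.
    simpl. rewrite Rmult_1_r. rewrite Rmult_assoc.
    apply Rmult_le_compat_l; [lra|].
    replace ((zeta b) * (zeta b)) with (1 * ((zeta b) * (zeta b))) by ring.
    apply Rmult_le_compat; try lra. }
  assert (c * (zeta b - zeta t') <= gap / 2).
  { apply Rle_trans with (c * ((eta/2) * (zeta b)^2)); [apply Rmult_le_compat_l; lra|].
    assert (0 <= c * (zeta b)^2) by (apply Rmult_le_pos; [lra| apply pow2_ge_0]).
    assert (eta * (2 * (c * (zeta b)^2 + 1)) <= gap).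
    { apply Rle_trans with (gap / (2 * (c * (zeta b) ^ 2 + 1)) * (2 * (c * (zeta b)^2 + 1))).
      apply Rmult_le_compat_r; lra. right; field; lra. }
    nra. }
  apply Rabs_def2 in Hdel. unfold gap in *.  lra.
Qed.

Lemma Lb_nonneg a b rho Lb : Hyp a b rho Lb -> 0 <= Lb.
Proof.
  intros HH. pose proof (rho_le_Lb a b rho Lb HH a) as H.
  destruct HH as [Ha [Hab [Hb [Hp _]]]].
  specialize (H ltac:(lra)). pose proof (Hp a ltac:(lra)).
  pose proof (zeta_ge2 a ltac:(lra2)). pose proof (zeta_ge2 b ltac:(lra2)).
  destruct (Rle_dec 0 Lb) as [ok|nok]; [exact ok|].
  assert (Lb * zeta a / zeta b < 0).
  { unfold Rdiv. assert (0 < / zeta b) by (apply Rinv_0_lt_compat; lra).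
    assert (Lb * zeta a < 0) by nra.
    rewrite <- (Rmult_0_l (/ zeta b)); apply Rmult_lt_compat_r; lra. }
  lra.
Qed.

Lemma La_nonneg a b rho La : a < b -> (forall t, a <= t <= b -> 0 <= rho t) ->
  right_lim rho a La -> 0 <= La.
Proof.
  intros Hab Hp Hl. destruct (Rle_dec 0 La) as [ok|nok]; [exact ok|].
  destruct (Hl (- La) ltac:(lra)) as [del [Hd Hdel]].
  set (t := a + Rmin del (b - a) / 2).
  assert (0 < Rmin del (b - a)) by (apply Rmin_pos; lra).
  assert (Rmin del (b-a) <= del) by apply Rmin_l.
  assert (Rmin del (b-a) <= b - a) by apply Rmin_r.
  specialize (Hdel t ltac:(unfold t; lra)). apply Rabs_def2 in Hdel.
  pose proof (Hp t ltac:(unfold t; lra)). lra.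
Qed.
Lemma h_diff a b rho Lb x y : Hyp a b rho Lb -> a <= x -> x <= y -> y <= b ->
  h_fun rho a y - h_fun rho a x = RInt rho x y.
Proof.
  intros HH Hx Hxy Hy. unfold h_fun.
  rewrite (mint_chasles rho a b x y (rho_mono a b rho Lb HH) Hx Hxy Hy). ring.
Qed.

Lemma h_a a rho : h_fun rho a a = 0.
Proof. unfold h_fun. apply RInt_zero. Qed.

Lemma psi_a a rho : psi rho a a = 1.
Proof. unfold psi. rewrite h_a. apply exp_0. Qed.

Lemma h_mono a b rho Lb x y : Hyp a b rho Lb -> a <= x -> x <= y -> y <= b ->
  0 <= h_fun rho a y - h_fun rho a x.
Proof.
  intros HH Hx Hxy Hy. rewrite (h_diff a b rho Lb x y HH Hx Hxy Hy).
  pose proof (rho_mono a b rho Lb HH) as Hm.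
  replace 0 with (0 * (y - x)) by ring.
  apply RInt_lb; [lra| exact (mint_int rho a b x y Hm Hx Hxy Hy)|].
  intros t Ht. destruct HH as [_ [_ [_ [Hp _]]]]. apply Hp; lra.
Qed.

Lemma h_lip a b rho Lb x y : Hyp a b rho Lb -> a <= x -> x <= y -> y <= b ->
  h_fun rho a y - h_fun rho a x <= Lb * zeta y / zeta b * (y - x).
Proof.
  intros HH Hx Hxy Hy. rewrite (h_diff a b rho Lb x y HH Hx Hxy Hy).
  pose proof (rho_mono a b rho Lb HH) as Hm.
  apply RInt_ub; [lra| exact (mint_int rho a b x y Hm Hx Hxy Hy)|].
  intros t Ht. apply Rle_trans with (Lb * zeta t / zeta b).
  - apply (rho_le_Lb a b rho Lb HH). lra.
  - pose proof (Lb_nonneg a b rho Lb HH).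
    destruct HH as [Ha [Hab [Hb _]]].
    pose proof (zeta_ge2 b ltac:(lra2)).
    pose proof (zeta_mono t y ltac:(lra) ltac:(lra) ltac:(lra)).
    unfold Rdiv. apply Rmult_le_compat_r; [left; apply Rinv_0_lt_compat; lra|].
    apply Rmult_le_compat_l; lra.
Qed.

Lemma h_lip2 a b rho Lb x y : Hyp a b rho Lb -> a <= x -> x <= y -> y <= b ->
  h_fun rho a y - h_fun rho a x <= Lb * (y - x).
Proof.
  intros HH Hx Hxy Hy. eapply Rle_trans; [apply (h_lip a b rho Lb x y HH Hx Hxy Hy)|].
  pose proof (Lb_nonneg a b rho Lb HH).
  destruct HH as [Ha [Hab [Hb _]]].
  pose proof (zeta_ge2 b ltac:(lra2)).
  pose proof (zeta_ge2 y ltac:(lra2)).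
  pose proof (zeta_mono y b ltac:(lra) ltac:(lra) ltac:(lra)).
  apply Rmult_le_compat_r; [lra|].
  apply Rmult_le_reg_r with (zeta b); [lra|].
  replace (Lb * zeta y / zeta b * zeta b) with (Lb * zeta y) by (field; lra).
  apply Rmult_le_compat_l; lra.
Qed.

Lemma psi_mono a b rho Lb x y : Hyp a b rho Lb -> a <= x -> x <= y -> y <= b ->
  psi rho a x <= psi rho a y.
Proof.
  intros HH Hx Hxy Hy. pose proof (h_mono a b rho Lb x y HH Hx Hxy Hy).
  unfold psi. destruct (Rle_lt_or_eq_dec (h_fun rho a x) (h_fun rho a y)) as [H1|H1]; [lra| |].
  - left. apply exp_increasing. exact H1.
  - rewrite H1. lra.
Qed.

Lemma psi_ge1 a b rho Lb x : Hyp a b rho Lb -> a <= x <= b -> 1 <= psi rho a x.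
Proof.
  intros HH Hx. rewrite <- (psi_a a rho). apply (psi_mono a b rho Lb); [exact HH| lra | lra | lra].
Qed.

Lemma psi_diff a b rho Lb x y : Hyp a b rho Lb -> a <= x -> x <= y -> y <= b ->
  psi rho a y - psi rho a x <= psi rho a y * (h_fun rho a y - h_fun rho a x).
Proof.
  intros HH Hx Hxy Hy. unfold psi.
  pose proof (exp_ineq1_le (h_fun rho a x - h_fun rho a y)) as H.
  replace (exp (h_fun rho a x)) with (exp (h_fun rho a y) * exp (h_fun rho a x - h_fun rho a y)).
  2:{ rewrite <- exp_plus. f_equal. ring. }
  pose proof (exp_pos (h_fun rho a y)). nra.
Qed.

Lemma f_mono a b rho Lb : Hyp a b rho Lb -> mono_on (f_fun rho a) a b.
Proof.
  intros HH x y Hx Hxy Hy. unfold f_fun.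
  pose proof (psi_mono a b rho Lb x y HH Hx Hxy Hy).
  pose proof (psi_ge1 a b rho Lb x HH ltac:(lra)).
  destruct HH as [Ha [Hab [Hb _]]].
  pose proof (zeta_ge2 x ltac:(lra2)).
  pose proof (zeta_mono x y ltac:(lra) ltac:(lra) ltac:(lra)).
  apply Rmult_le_compat; try lra.
  - apply Rmult_le_pos; [lra| apply pow2_ge_0].
  - apply Rmult_le_compat; try lra. apply pow2_ge_0.
    simpl. rewrite !Rmult_1_r. apply Rmult_le_compat; lra.
Qed.
Definition C0 a b := zeta a + zeta b - 2.
Definition KK a b := b * zeta b - a * zeta a.
Definition W0 a b x := C0 a b * (zeta x - zeta a) - KK a b * (a * zeta a).
Definition kq a b x := b * zeta b * (x * zeta x) - W0 a b x.
Definition CC a b La Lb := C0 a b + a * La + b * Lb.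
Definition JJ rho a x := RInt (f_fun rho a) a x.
Definition GG a b rho La Lb x := CC a b La Lb * JJ rho a x - W0 a b x * psi rho a x.

Lemma W0_b a b : 0 <= a -> a < b -> b < 1 -> W0 a b b = KK a b * (b * zeta b).
Proof.
  intros. unfold W0, C0, KK. unfold zeta. field. split; nra.
Qed.

Lemma KK_nonneg a b : 0 <= a -> a < b -> b < 1 -> 0 <= KK a b.
Proof.
  intros. unfold KK. pose proof (zeta_mono a b ltac:(lra) ltac:(lra) ltac:(lra)).
  pose proof (zeta_ge2 a ltac:(lra2)). nra.
Qed.

Lemma C0_ge2 a b : 0 <= a -> a < b -> b < 1 -> 2 <= C0 a b.
Proof. intros. unfold C0. pose proof (zeta_ge2 a ltac:(lra2)). pose proof (zeta_ge2 b ltac:(lra2)). lra. Qed.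

Lemma W0_le a b x : 0 <= a -> a <= x -> x <= b -> b < 1 -> a < b -> W0 a b x <= W0 a b b.
Proof.
  intros. unfold W0. pose proof (C0_ge2 a b ltac:(lra) ltac:(lra) ltac:(lra)).
  pose proof (zeta_mono x b ltac:(lra) ltac:(lra) ltac:(lra)). nra.
Qed.

Lemma quad_aux (al ub c0 a b x : R) :
  a < b -> a <= x <= b ->
  0 <= - al * a^2 + 2 * ub * a + (al - 2 * c0) ->
  0 <= - al * b^2 + 2 * ub * b + (al - 2 * c0) ->
  al * (x - a) * (b - x) <= - al * x^2 + 2 * ub * x + (al - 2 * c0).
Proof.
  intros Hab Hx Qa Qb.
  assert (E : (b - a) * ((- al * x^2 + 2 * ub * x + (al - 2 * c0)) - al * (x - a) * (b - x)) =
     (- al * a^2 + 2 * ub * a + (al - 2 * c0)) * (b - x) + (- al * b^2 + 2 * ub * b + (al - 2 * c0)) * (x - a)) by ring.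
  assert (0 <= (- al * a^2 + 2 * ub * a + (al - 2 * c0)) * (b - x)) by (apply Rmult_le_pos; lra).
  assert (0 <= (- al * b^2 + 2 * ub * b + (al - 2 * c0)) * (x - a)) by (apply Rmult_le_pos; lra).
  assert (0 <= (b - a) * ((- al * x^2 + 2 * ub * x + (al - 2 * c0)) - al * (x - a) * (b - x))) by lra.
  destruct (Rle_dec 0 ((- al * x^2 + 2 * ub * x + (al - 2 * c0)) - al * (x - a) * (b - x))) as [h|h]; [lra|].
  exfalso. assert ((b - a) * ((- al * x^2 + 2 * ub * x + (al - 2 * c0)) - al * (x - a) * (b - x)) < 0).
  { rewrite <- (Rmult_0_r (b - a)). apply Rmult_lt_compat_l; lra. }
  lra.
Qed.

Lemma kq_bound a b x : 0 <= a -> a < b -> b < 1 -> a <= x <= b ->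
  4 * (x - a) * (b - x) <= (1 - x^2) * kq a b x.
Proof.
  intros Ha Hab Hb Hx.
  set (al := C0 a b * zeta a + KK a b * (a * zeta a)).
  set (ub := b * zeta b).
  assert (Q : forall t, 0 <= t <= b -> (1 - t^2) * kq a b t = - al * t^2 + 2 * ub * t + (al - 2 * C0 a b)).
  { intros t Ht. unfold kq, W0, al, ub. unfold zeta. field. nra. }
  pose proof (C0_ge2 a b Ha Hab Hb). pose proof (zeta_ge2 a ltac:(lra2)).
  pose proof (zeta_ge2 b ltac:(lra2)).
  pose proof (KK_nonneg a b Ha Hab Hb).
  assert (Hal : 4 <= al).
  { unfold al. assert (0 <= KK a b * (a * zeta a)) by (apply Rmult_le_pos; [lra| apply Rmult_le_pos; lra]). nra. }
  rewrite (Q x ltac:(lra)).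
  apply Rle_trans with (al * (x - a) * (b - x)).
  { assert (0 <= (x - a) * (b - x)) by (apply Rmult_le_pos; lra). nra. }
  apply quad_aux; try lra.
  - rewrite <- (Q a ltac:(lra)). apply Rmult_le_pos; [nra|].
    unfold kq, W0. replace (zeta a - zeta a) with 0 by ring.
    assert (0 <= a * zeta a) by (apply Rmult_le_pos; lra).
    assert (0 <= b * zeta b) by (apply Rmult_le_pos; lra).
    assert (0 <= b * zeta b * (a * zeta a)) by (apply Rmult_le_pos; lra).
    assert (0 <= KK a b * (a * zeta a)) by (apply Rmult_le_pos; lra).
    lra.
  - rewrite <- (Q b ltac:(lra)). apply Rmult_le_pos; [nra|].
    unfold kq. rewrite W0_b by lra. unfold KK.
    assert (0 <= a * zeta a) by (apply Rmult_le_pos; lra).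
    assert (0 <= b * zeta b) by (apply Rmult_le_pos; lra).
    nra.
Qed.
Definition sig a b rho Lb x :=
  if Rle_dec (W0 a b x) 0 then b * Lb * (x * zeta x ^ 2 * psi rho a x)
  else Lb * zeta x * psi rho a x / zeta b * kq a b x.

Lemma local_est a b rho La Lb : Hyp a b rho Lb -> 0 <= La ->
  exists L, forall x y, a <= x -> x <= y -> y <= b ->
   sig a b rho Lb x * (y - x) - L * (y - x)^2 <= GG a b rho La Lb y - GG a b rho La Lb x.
Proof.
  intros HH HLa.
  pose proof (Lb_nonneg a b rho Lb HH) as HLb.
  pose proof HH as HH'. destruct HH' as [Ha [Hab [Hb [Hp _]]]].
  assert (HZ : 2 <= (zeta b)) by (apply zeta_ge2; lra2).
  assert (HP : 1 <= (psi rho a b)) by (apply (psi_ge1 a b rho Lb); [exact HH| lra]).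
  pose proof (C0_ge2 a b Ha Hab Hb) as HC0.
  pose proof (KK_nonneg a b Ha Hab Hb) as HK.
  set (W0b := W0 a b b).
  assert (HW0b : 0 <= W0b).
  { unfold W0b. rewrite W0_b by lra. apply Rmult_le_pos; [lra|]. apply Rmult_le_pos; lra. }
  set (L1 := (zeta b)^3 * (psi rho a b) + (zeta b)^2 * (psi rho a b) * Lb).
  set (L2 := (zeta b)^2 * (psi rho a b) + (zeta b) * (psi rho a b) * Lb).
  assert (Z2: 0 <= zeta b ^ 2) by apply pow2_ge_0.
  assert (Z3: 0 <= zeta b ^ 3) by (apply pow_le; lra).
  assert (HL1 : 0 <= L1) by (unfold L1; apply Rplus_le_le_0_compat; [apply Rmult_le_pos; lra | apply Rmult_le_pos; [apply Rmult_le_pos|]; lra]).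
  assert (HL2 : 0 <= L2) by (unfold L2; apply Rplus_le_le_0_compat; [apply Rmult_le_pos; lra | apply Rmult_le_pos; [apply Rmult_le_pos|]; lra]).
  exists (C0 a b * L1 + Lb * W0b * L2).
  intros x y Hx Hxy Hy.
  set (d := y - x).
  set (px := psi rho a x). set (py := psi rho a y).
  set (hx := h_fun rho a x). set (hy := h_fun rho a y).
  set (zx := zeta x). set (zy := zeta y).
  assert (Hd : 0 <= d) by (unfold d; lra).
  assert (Hzx : 2 <= zx) by (apply zeta_ge2; lra2).
  assert (Hzxy : zx <= zy) by (apply zeta_mono; lra).
  assert (HzyZ : zy <= (zeta b)) by (apply zeta_mono; lra).
  assert (Hpx : 1 <= px) by (apply (psi_ge1 a b rho Lb); [exact HH| lra]).
  assert (Hpxy : px <= py) by (apply (psi_mono a b rho Lb); [exact HH| lra | lra | lra]).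
  assert (HpyP : py <= (psi rho a b)) by (apply (psi_mono a b rho Lb); [exact HH| lra | lra | lra]).
  assert (Hh0 : 0 <= hy - hx) by (apply (h_mono a b rho Lb); [exact HH| lra | lra | lra]).
  assert (Hh1 : hy - hx <= Lb * zy / (zeta b) * d) by (apply (h_lip a b rho Lb); [exact HH| lra | lra | lra]).
  assert (Hh2 : hy - hx <= Lb * d) by (apply (h_lip2 a b rho Lb); [exact HH| lra | lra | lra]).
  assert (Hpd : py - px <= py * (hy - hx)) by (apply (psi_diff a b rho Lb); [exact HH| lra | lra | lra]).
  assert (Hpd2 : py - px <= (psi rho a b) * Lb * d).
  { apply Rle_trans with (py * (hy - hx)); [exact Hpd|].
    rewrite Rmult_assoc. apply Rmult_le_compat; lra. }
  assert (HJ : x * zx ^ 2 * px * d <= JJ rho a y - JJ rho a x).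
  { unfold JJ. rewrite (mint_chasles (f_fun rho a) a b x y (f_mono a b rho Lb HH) Hx Hxy Hy).
    replace (RInt (f_fun rho a) a x + RInt (f_fun rho a) x y - RInt (f_fun rho a) a x)
      with (RInt (f_fun rho a) x y) by ring.
    apply (mint_lower (f_fun rho a) a b x y (f_mono a b rho Lb HH) Hx Hxy Hy). }
  assert (Hf0 : 0 <= x * zx ^ 2 * px) by (apply Rmult_le_pos; [apply Rmult_le_pos; [lra| apply pow2_ge_0]| lra]).
  assert (Hzd : zy - zx = d * (x + y) * zx * zy / 2) by (unfold zy, zx, d; apply zeta_diff; lra).
  assert (Hzd2 : x * zx ^ 2 * d - (zy - zx) = - d^2 * (1 + x^2 + 2*x*y) * zx^2 * zy / 4)
    by (unfold zy, zx, d; apply zeta_diff2; lra).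
  assert (HzzZ : zx * zy <= (zeta b)^2) by (simpl; rewrite Rmult_1_r; apply Rmult_le_compat; lra).
  assert (S2 : zy - zx <= d * (zeta b)^2).
  { rewrite Hzd. replace (d * (x + y) * zx * zy / 2) with (d * ((x+y)/2) * (zx * zy)) by field.
    apply Rle_trans with (d * 1 * (zx * zy)).
    - apply Rmult_le_compat_r; [nra|]. apply Rmult_le_compat_l; lra.
    - rewrite Rmult_1_r. apply Rmult_le_compat_l; lra. }
  assert (S3 : - d^2 * (zeta b)^3 <= x * zx ^ 2 * d - (zy - zx)).
  { rewrite Hzd2.
    assert (Hq : 0 <= 1 + x^2 + 2*x*y <= 4) by nra.
    assert (Hz3 : zx^2 * zy <= (zeta b)^3).
    { replace ((zeta b)^3) with ((zeta b)^2 * (zeta b)) by ring. apply Rmult_le_compat; try nra.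
      all: try (simpl; rewrite !Rmult_1_r; apply Rmult_le_compat; lra). }
    assert (0 <= zx^2 * zy) by nra.
    assert (0 <= d^2) by nra.
    assert ((1 + x^2 + 2*x*y) * (zx^2 * zy) <= 4 * (zeta b)^3).
    { apply Rmult_le_compat; lra. }
    replace (- d ^ 2 * (1 + x ^ 2 + 2 * x * y) * zx ^ 2 * zy / 4) with (- (d^2 * ((1 + x^2 + 2*x*y) * (zx^2 * zy))) / 4) by field.
    assert (d^2 * ((1 + x^2 + 2*x*y) * (zx^2 * zy)) <= d^2 * (4 * (zeta b)^3)) by (apply Rmult_le_compat_l; lra).
    lra. }
  assert (E1 : - L1 * d^2 <= x * zx ^ 2 * px * d - (zy - zx) * py).
  { replace (x * zx ^ 2 * px * d - (zy - zx) * py) with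
      (px * (x * zx ^ 2 * d - (zy - zx)) - (zy - zx) * (py - px)) by ring.
    assert (A1 : - d^2 * (zeta b)^3 * (psi rho a b) <= px * (x * zx ^ 2 * d - (zy - zx))).
    { destruct (Rle_dec 0 (x * zx ^ 2 * d - (zy - zx))) as [h|h].
      - assert (0 <= d^2 * (zeta b)^3 * (psi rho a b)) by (apply Rmult_le_pos; [apply Rmult_le_pos; nra| lra]).
        assert (0 <= px * (x * zx ^ 2 * d - (zy - zx))) by (apply Rmult_le_pos; lra). lra.
      - assert ((x * zx ^ 2 * d - (zy - zx)) * (psi rho a b) <= (x * zx ^ 2 * d - (zy - zx)) * px).
        { apply Rmult_le_compat_neg_l; lra. }
        assert ((psi rho a b) * (- d^2 * (zeta b)^3) <= (psi rho a b) * (x * zx ^ 2 * d - (zy - zx))) by (apply Rmult_le_compat_l; lra).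
        lra. }
    assert (A2 : (zy - zx) * (py - px) <= (d * (zeta b)^2) * ((psi rho a b) * Lb * d)).
    { apply Rmult_le_compat; try lra; nra. }
    unfold L1. nra. }
  assert (E2 : zy * py - zx * px <= L2 * d).
  { replace (zy * py - zx * px) with ((zy - zx) * py + zx * (py - px)) by ring.
    assert ((zy - zx) * py <= (d * (zeta b)^2) * (psi rho a b)) by (apply Rmult_le_compat; nra).
    assert (zx * (py - px) <= (zeta b) * ((psi rho a b) * Lb * d)) by (apply Rmult_le_compat; lra).
    unfold L2. nra. }
  unfold GG.
  fold px py.
  assert (HW : W0 a b y - W0 a b x = C0 a b * (zy - zx)) by (unfold W0, zy, zx; ring).
  assert (HC : (C0 a b + b * Lb) * (x * zx ^ 2 * px * d) <= CC a b La Lb * (JJ rho a y - JJ rho a x)).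
  { unfold CC. assert (0 <= a * La) by (apply Rmult_le_pos; lra).
    assert (0 <= b * Lb) by (apply Rmult_le_pos; lra).
    apply Rle_trans with ((C0 a b + a * La + b * Lb) * (x * zx ^ 2 * px * d)).
    - apply Rmult_le_compat_r; [apply Rmult_le_pos; lra| lra].
    - apply Rmult_le_compat_l; lra. }
  assert (HCE : C0 a b * (- L1 * d^2) <= C0 a b * (x * zx ^ 2 * px * d - (zy - zx) * py))
    by (apply Rmult_le_compat_l; lra).
  assert (HW0x : W0 a b x <= W0b) by (unfold W0b; apply W0_le; lra).
  assert (0 <= Lb * W0b * L2 * d^2) by (apply Rmult_le_pos; [apply Rmult_le_pos; [apply Rmult_le_pos|]|]; nra).
  unfold sig. fold zx px.
  destruct (Rle_dec (W0 a b x) 0) as [Wn|Wp].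
  -
    assert (W0 a b x * (py - px) <= 0) by nra.
    replace (W0 a b y * py - W0 a b x * px) with (C0 a b * (zy - zx) * py + W0 a b x * (py - px))
      by (rewrite <- HW; ring).
    replace (b * Lb * (x * zx ^ 2 * px) * d) with (b * Lb * (x * zx ^ 2 * px * d)) by (fold d; ring).
    fold d. nra.
  -
    assert (Hw : 0 < W0 a b x) by lra.
    assert (T1 : W0 a b x * (py - px) <= W0 a b x * (py * (Lb * zy / (zeta b) * d))).
    { apply Rmult_le_compat_l; [lra|]. apply Rle_trans with (py * (hy - hx)); [exact Hpd|].
      apply Rmult_le_compat_l; lra. }
    assert (Hk : b * Lb * (x * zx ^ 2 * px * d) =
       Lb * zx * px / (zeta b) * kq a b x * d + Lb / (zeta b) * W0 a b x * zx * px * d).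
    { unfold kq. fold zx. field. lra. }
    assert (T2 : Lb / (zeta b) * W0 a b x * zx * px * d - W0 a b x * (py * (Lb * zy / (zeta b) * d)) =
       - (Lb / (zeta b) * W0 a b x) * (zy * py - zx * px) * d) by (field; lra).
    assert (T3 : Lb / (zeta b) * W0 a b x <= Lb * W0b).
    { apply Rle_trans with (Lb * W0 a b x).
      - unfold Rdiv. rewrite (Rmult_comm Lb (/ (zeta b))), Rmult_assoc. 
        assert (/ (zeta b) <= 1) by (apply Rmult_le_reg_l with (zeta b); [lra|]; rewrite Rinv_r by lra; lra).
        assert (0 <= Lb * W0 a b x) by nra. nra.
      - apply Rmult_le_compat_l; lra. }
    assert (T4 : 0 <= Lb / (zeta b) * W0 a b x).
    { unfold Rdiv. apply Rmult_le_pos; [apply Rmult_le_pos; [lra| left; apply Rinv_0_lt_compat; lra]| lra]. }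
    assert (T5 : (Lb / (zeta b) * W0 a b x) * (zy * py - zx * px) * d <= (Lb * W0b) * (L2 * d) * d).
    { assert (0 <= zy * py - zx * px) by nra.
      apply Rmult_le_compat_r; [lra|]. apply Rmult_le_compat; lra. }
    replace (W0 a b y * py - W0 a b x * px) with (C0 a b * (zy - zx) * py + W0 a b x * (py - px))
      by (rewrite <- HW; ring).
    replace (Lb * zx * px / (zeta b) * kq a b x * d) with
      (b * Lb * (x * zx ^ 2 * px * d) - Lb / (zeta b) * W0 a b x * zx * px * d) by lra.
    replace ((Lb * W0b) * (L2 * d) * d) with (Lb * W0b * L2 * d^2) in T5 by ring.
    fold d. nra.
Qed.
Lemma tele (G : R -> R) a b k L : a <= b ->
  (forall x y, a <= x -> x <= y -> y <= b -> k * (y - x) - L * (y - x)^2 <= G y - G x) ->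
  k * (b - a) <= G b - G a.
Proof.
  intros Hab H.
  set (L' := Rmax L 0).
  assert (H' : forall x y, a <= x -> x <= y -> y <= b -> k * (y - x) - L' * (y - x)^2 <= G y - G x).
  { intros x y Hx Hxy Hy. specialize (H x y Hx Hxy Hy).
    assert (L <= L') by apply Rmax_l. assert (0 <= (y - x)^2) by apply pow2_ge_0. nra. }
  assert (HL' : 0 <= L') by apply Rmax_r.
  assert (Hn : forall n : nat, (0 < n)%nat -> k * (b - a) - L' * (b - a)^2 / INR n <= G b - G a).
  { intros n Hn. set (del := (b - a) / INR n).
    assert (HI : 0 < INR n) by (apply lt_0_INR; lia).
    assert (Hdel : 0 <= del) by (unfold del; apply Rmult_le_pos; [lra| left; apply Rinv_0_lt_compat; lra]).
    assert (Hk : forall m : nat, (m <= n)%nat ->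
       k * (INR m * del) - L' * INR m * del^2 <= G (a + INR m * del) - G a).
    { induction m as [|m IH]; intros Hm.
      - simpl. rewrite Rmult_0_l, Rplus_0_r. lra.
      - specialize (IH ltac:(lia)).
        assert (Hmn : INR (S m) <= INR n) by (apply le_INR; lia).
        assert (HSm : INR (S m) * del <= b - a).
        { unfold del. replace (b - a) with (INR n * ((b - a) / INR n)) at 2 by (field; lra).
          apply Rmult_le_compat_r; [exact Hdel| exact Hmn]. }
        rewrite S_INR in *.
        pose proof (pos_INR m).
        specialize (H' (a + INR m * del) (a + (INR m + 1) * del) ltac:(nra) ltac:(nra) ltac:(nra)).
        replace (a + (INR m + 1) * del - (a + INR m * del)) with del in H' by ring.
        nra. }
    specialize (Hk n (le_n n)).
    replace (a + INR n * del) with b in Hk by (unfold del; field; lra).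
    replace (INR n * del) with (b - a) in Hk by (unfold del; field; lra).
    replace (L' * (b - a)^2 / INR n) with (L' * INR n * del^2) by (unfold del; field; lra).
    exact Hk. }
  destruct (Rle_dec (k * (b - a)) (G b - G a)) as [ok|nok]; [exact ok|].
  exfalso. set (gap := k * (b - a) - (G b - G a)).
  assert (Hg : 0 < gap) by (unfold gap; lra).
  destruct (archimed (L' * (b - a)^2 / gap)) as [Har _].
  assert (Hz : (0 <= up (L' * (b - a)^2 / gap))%Z).
  { apply le_IZR. assert (0 <= L' * (b - a)^2 / gap).
    { unfold Rdiv. apply Rmult_le_pos; [apply Rmult_le_pos; [lra| apply pow2_ge_0]| left; apply Rinv_0_lt_compat; lra]. }
    lra. }
  destruct (IZN_var Hz) as [n Hn'].
  rewrite Hn', <- INR_IZR_INZ in Har.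
  assert (Hn0 : (0 < S n)%nat) by lia.
  specialize (Hn (S n) Hn0).
  rewrite S_INR in Hn.
  pose proof (pos_INR n).
  assert (L' * (b - a)^2 / (INR n + 1) < gap).
  { apply Rmult_lt_reg_r with (INR n + 1); [lra|].
    replace (L' * (b - a)^2 / (INR n + 1) * (INR n + 1)) with (L' * (b - a)^2) by (field; lra).
    assert (L' * (b - a)^2 / gap * gap = L' * (b - a)^2) by (field; lra).
    nra. }
  unfold gap in *. lra.
Qed.

Lemma sig_nonneg a b rho Lb x : Hyp a b rho Lb -> a <= x <= b -> 0 <= sig a b rho Lb x.
Proof.
  intros HH Hx. pose proof (Lb_nonneg a b rho Lb HH) as HLb.
  pose proof (psi_ge1 a b rho Lb x HH Hx) as Hp.
  destruct HH as [Ha [Hab [Hb _]]].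
  pose proof (zeta_ge2 x ltac:(lra2)). pose proof (zeta_ge2 b ltac:(lra2)).
  unfold sig. destruct (Rle_dec (W0 a b x) 0).
  - apply Rmult_le_pos; [apply Rmult_le_pos; lra|].
    apply Rmult_le_pos; [apply Rmult_le_pos; [lra| apply pow2_ge_0]| lra].
  - pose proof (kq_bound a b x Ha Hab Hb Hx).
    assert (0 <= kq a b x).
    { assert (0 < 1 - x^2) by nra. assert (0 <= (x - a) * (b - x)) by (apply Rmult_le_pos; lra).
      nra. }
    apply Rmult_le_pos; [|lra]. unfold Rdiv.
    apply Rmult_le_pos; [| left; apply Rinv_0_lt_compat; lra].
    apply Rmult_le_pos; [apply Rmult_le_pos|]; lra.
Qed.

Lemma sig_pos a b rho Lb x : Hyp a b rho Lb ->
  a + (b - a) / 3 <= x <= b - (b - a) / 3 ->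
  Lb * Rmin (4 * b * (a + (b - a) / 3)) (8 * (b - a)^2 / (9 * zeta b)) <= sig a b rho Lb x.
Proof.
  intros HH Hx. pose proof (Lb_nonneg a b rho Lb HH) as HLb.
  pose proof HH as HH'. destruct HH' as [Ha [Hab [Hb _]]].
  pose proof (psi_ge1 a b rho Lb x HH ltac:(lra)) as Hp.
  pose proof (zeta_ge2 x ltac:(lra2)). pose proof (zeta_ge2 b ltac:(lra2)).
  unfold sig. destruct (Rle_dec (W0 a b x) 0).
  - apply Rle_trans with (Lb * (4 * b * (a + (b - a) / 3))).
    { apply Rmult_le_compat_l; [lra| apply Rmin_l]. }
    assert (4 <= zeta x ^ 2) by nra.
    assert (4 * (a + (b - a) / 3) <= x * zeta x ^ 2 * psi rho a x).
    { apply Rle_trans with (x * zeta x ^ 2 * 1); [nra|].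
      apply Rmult_le_compat_l; [nra| lra]. }
    assert (0 <= b * Lb) by (apply Rmult_le_pos; lra).
    replace (Lb * (4 * b * (a + (b - a) / 3))) with (b * Lb * (4 * (a + (b - a) / 3))) by ring.
    apply Rmult_le_compat_l; lra.
  - apply Rle_trans with (Lb * (8 * (b - a)^2 / (9 * zeta b))).
    { apply Rmult_le_compat_l; [lra| apply Rmin_r]. }
    pose proof (kq_bound a b x Ha Hab Hb ltac:(lra)) as Hk.
    assert (0 < 1 - x^2 <= 1) by nra.
    assert (Hab3 : (b - a)^2 / 9 <= (x - a) * (b - x)) by nra.
    assert (0 <= (x - a) * (b - x)) by (apply Rmult_le_pos; lra).
    assert (0 <= kq a b x) by nra.
    assert ((1 - x^2) * kq a b x <= kq a b x) by nra.
    assert (4 * ((b - a)^2 / 9) <= kq a b x) by nra.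
    replace (Lb * zeta x * psi rho a x / zeta b * kq a b x) with
      (Lb / zeta b * (zeta x * psi rho a x * kq a b x)) by (field; lra).
    replace (Lb * (8 * (b - a) ^ 2 / (9 * zeta b))) with (Lb / zeta b * (2 * 1 * (4 * ((b - a)^2 / 9)))) by (field; lra).
    apply Rmult_le_compat_l.
    { unfold Rdiv. apply Rmult_le_pos; [lra| left; apply Rinv_0_lt_compat; lra]. }
    assert (0 <= (b - a)^2) by apply pow2_ge_0.
    apply Rmult_le_compat; try lra.
    apply Rmult_le_compat; lra.
Qed.
Module FTCm.
Import Coquelicot.Coquelicot.
Lemma zeta_integral (F : R -> R) a b (pr : Riemann_integrable F a b) :
  0 <= a -> a < b -> b < 1 ->
  (forall x, a < x < b -> F x = x * zeta x ^ 2) ->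
  RiemannInt pr = zeta b - zeta a.
Proof.
  intros Ha Hab Hb HF.
  pose proof (ex_RInt_Reals_aux_1 F a b pr) as H1.
  assert (H2 : is_RInt (fun x => x * zeta x ^ 2) a b (minus (zeta b) (zeta a))).
  { apply (is_RInt_derive zeta (fun x => x * zeta x ^ 2)).
    - intros x Hx. rewrite Rmin_left, Rmax_right in Hx by lra.
      unfold zeta. auto_derive. nra. field. nra.
    - intros x Hx. rewrite Rmin_left, Rmax_right in Hx by lra.
      apply (ex_derive_continuous (K:=R_AbsRing) (V:=R_NormedModule)). unfold zeta. auto_derive. nra. }
  replace (minus (zeta b) (zeta a)) with (zeta b - zeta a) in H2 by reflexivity.
  assert (H3 : is_RInt F a b (zeta b - zeta a)).
  { apply is_RInt_ext with (fun x => x * zeta x ^ 2); [|exact H2].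
    intros x Hx. rewrite Rmin_left, Rmax_right in Hx by lra. symmetry. apply HF; exact Hx. }
  rewrite <- (is_RInt_unique F a b _ H1). apply is_RInt_unique. exact H3.
Qed.
End FTCm.
Lemma G_diff_nonneg a b rho La Lb x y : Hyp a b rho Lb -> 0 <= La ->
  a <= x -> x <= y -> y <= b -> 0 <= GG a b rho La Lb y - GG a b rho La Lb x.
Proof.
  intros HH HLa Hx Hxy Hy.
  destruct (local_est a b rho La Lb HH HLa) as [L HL].
  replace 0 with (0 * (y - x)) by ring.
  apply (tele (GG a b rho La Lb) x y 0 L Hxy).
  intros u v Hu Huv Hv. specialize (HL u v ltac:(lra) Huv ltac:(lra)).
  pose proof (sig_nonneg a b rho Lb u HH ltac:(lra)).
  assert (0 <= sig a b rho Lb u * (v - u)) by (apply Rmult_le_pos; lra). lra.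
Qed.

Lemma I_pos a b rho Lb : Hyp a b rho Lb -> 0 < RInt (f_fun rho a) a b.
Proof.
  intros HH. pose proof HH as HH'. destruct HH' as [Ha [Hab [Hb _]]].
  set (m := (a + b) / 2).
  pose proof (f_mono a b rho Lb HH) as Hm.
  rewrite (mint_chasles (f_fun rho a) a b m b Hm ltac:(unfold m; lra) ltac:(unfold m; lra) ltac:(lra)).
  pose proof (mint_lower (f_fun rho a) a b m b Hm ltac:(unfold m; lra) ltac:(unfold m; lra) ltac:(lra)).
  assert (Ham : a <= m) by (unfold m; lra).
  rewrite (mint_chasles (f_fun rho a) a b a m Hm ltac:(lra) Ham ltac:(unfold m; lra)).
  pose proof (mint_lower (f_fun rho a) a b a m Hm ltac:(lra) Ham ltac:(unfold m; lra)).
  rewrite RInt_zero.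
  assert (0 <= f_fun rho a a).
  { unfold f_fun. rewrite psi_a. apply Rmult_le_pos; [apply Rmult_le_pos; [lra| apply pow2_ge_0]| lra]. }
  assert (0 < f_fun rho a m).
  { unfold f_fun. pose proof (psi_ge1 a b rho Lb m HH ltac:(unfold m; lra)).
    pose proof (zeta_ge2 m ltac:(unfold m; lra2)).
    assert (0 < m) by (unfold m; lra).
    apply Rmult_lt_0_compat; [apply Rmult_lt_0_compat; [lra| nra]| lra]. }
  assert (0 <= f_fun rho a a * (m - a)) by (apply Rmult_le_pos; lra).
  assert (0 < f_fun rho a m * (b - m)) by (apply Rmult_lt_0_compat; unfold m in *; lra).
  lra.
Qed.

Lemma G_ba a b rho La Lb : 0 <= a -> a < b -> b < 1 ->
  GG a b rho La Lb b - GG a b rho La Lb a =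
  CC a b La Lb * RInt (f_fun rho a) a b - KK a b * (g_fun rho a a + g_fun rho a b).
Proof.
  intros. unfold GG, JJ, g_fun. rewrite RInt_zero, psi_a, W0_b by lra.
  unfold W0. ring.
Qed.

Lemma rhs_eq a b La Lb : 0 <= a -> a < b -> b < 1 ->
  2 + a * (rho_hat a + La) + b * (rho_hat b + Lb) = CC a b La Lb.
Proof.
  intros. unfold rho_hat, CC, C0.
  pose proof (zeta_mul a ltac:(lra2)). pose proof (zeta_mul b ltac:(lra2)).
  nra.
Qed.

Lemma lim_zero_r rho a b La : a < b -> (forall t, a < t < b -> rho t = 0) ->
  right_lim rho a La -> La = 0.
Proof.
  intros Hab Hz Hl. destruct (Req_dec La 0) as [ok|ne]; [exact ok|]. exfalso.
  assert (Hp : 0 < Rabs La) by (apply Rabs_pos_lt; exact ne).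
  destruct (Hl (Rabs La) Hp) as [del [Hd H]].
  assert (0 < Rmin del (b - a)) by (apply Rmin_pos; lra).
  assert (Rmin del (b-a) <= del) by apply Rmin_l.
  assert (Rmin del (b-a) <= b - a) by apply Rmin_r.
  specialize (H (a + Rmin del (b - a) / 2) ltac:(lra)).
  rewrite Hz in H by lra. rewrite Rminus_0_l, Rabs_Ropp in H. lra.
Qed.

Lemma lim_zero_l rho a b Lb : a < b -> (forall t, a < t < b -> rho t = 0) ->
  left_lim rho b Lb -> Lb = 0.
Proof.
  intros Hab Hz Hl. destruct (Req_dec Lb 0) as [ok|ne]; [exact ok|]. exfalso.
  assert (Hp : 0 < Rabs Lb) by (apply Rabs_pos_lt; exact ne).
  destruct (Hl (Rabs Lb) Hp) as [del [Hd H]].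
  assert (0 < Rmin del (b - a)) by (apply Rmin_pos; lra).
  assert (Rmin del (b-a) <= del) by apply Rmin_l.
  assert (Rmin del (b-a) <= b - a) by apply Rmin_r.
  specialize (H (b - Rmin del (b - a) / 2) ltac:(lra)).
  rewrite Hz in H by lra. rewrite Rminus_0_l, Rabs_Ropp in H. lra.
Qed.

Theorem mainTheorem10 (a b : R) (rho : R -> R) (La Lb : R) :
  0 <= a -> a < b -> b < 1 ->
  (forall t, a <= t <= b -> 0 <= rho t) ->
  (forall s t, a <= s -> s <= t -> t <= b -> rho s / zeta s <= rho t / zeta t) ->
  (exists M, forall t, a <= t <= b -> Rabs (rho t / zeta t) <= M) ->
  right_lim rho a La ->
  left_lim rho b Lb ->
  ((b * zeta b - a * zeta a) * m_hat rho a b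
     <= 2 + a * (rho_hat a + La) + b * (rho_hat b + Lb))
  /\
  ((b * zeta b - a * zeta a) * m_hat rho a b
     = 2 + a * (rho_hat a + La) + b * (rho_hat b + Lb)
   <-> (forall t, a <= t < b -> rho t = 0)).
Proof.
  intros Ha Hab Hb Hp Hm _ HLa HLb.
  assert (HH : Hyp a b rho Lb) by (repeat split; assumption).
  pose proof (La_nonneg a b rho La Hab Hp HLa) as HLa0.
  pose proof (Lb_nonneg a b rho Lb HH) as HLb0.
  rewrite (rhs_eq a b La Lb Ha Hab Hb).
  change (b * zeta b - a * zeta a) with (KK a b).
  pose proof (I_pos a b rho Lb HH) as HI.
  set (I := RInt (f_fun rho a) a b) in *.
  assert (Hmh : KK a b * m_hat rho a b = KK a b * (g_fun rho a a + g_fun rho a b) / I)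
    by (unfold m_hat; fold I; field; lra).
  rewrite Hmh.
  pose proof (G_ba a b rho La Lb Ha Hab Hb) as HG. fold I in HG.
  pose proof (G_diff_nonneg a b rho La Lb a b HH HLa0 ltac:(lra) ltac:(lra) ltac:(lra)) as HG0.
  split.
  - apply Rmult_le_reg_r with I; [exact HI|].
    replace (KK a b * (g_fun rho a a + g_fun rho a b) / I * I) with (KK a b * (g_fun rho a a + g_fun rho a b)) by (field; lra).
    lra.
  - split.
    + intros Heq t Ht. destruct (Req_dec (rho t) 0) as [ok|ne]; [exact ok|]. exfalso.
      assert (Hrt : 0 < rho t) by (pose proof (Hp t ltac:(lra)); lra).
      assert (HLbp : 0 < Lb).
      { pose proof (rho_le_Lb a b rho Lb HH t Ht).
        pose proof (zeta_ge2 t ltac:(lra2)). pose proof (zeta_ge2 b ltac:(lra2)).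
        destruct (Rle_lt_dec Lb 0) as [hl|hl]; [|exact hl].
        assert (Lb * zeta t / zeta b <= 0).
        { unfold Rdiv. assert (0 < / zeta b) by (apply Rinv_0_lt_compat; lra).
          assert (Lb * zeta t <= 0) by nra.
          rewrite <- (Rmult_0_l (/ zeta b)). apply Rmult_le_compat_r; lra. }
        lra. }
      set (c := a + (b - a) / 3). set (d := b - (b - a) / 3).
      set (kap := Lb * Rmin (4 * b * (a + (b - a) / 3)) (8 * (b - a)^2 / (9 * zeta b))).
      assert (Hkap : 0 < kap).
      { unfold kap. apply Rmult_lt_0_compat; [exact HLbp|].
        pose proof (zeta_ge2 b ltac:(lra2)).
        apply Rmin_pos; [nra|].
        unfold Rdiv. apply Rmult_lt_0_compat; [nra| apply Rinv_0_lt_compat; lra]. }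
      assert (H1 : 0 <= GG a b rho La Lb c - GG a b rho La Lb a)
        by (apply (G_diff_nonneg a b rho La Lb); [exact HH| exact HLa0|..]; unfold c; lra).
      assert (H3 : 0 <= GG a b rho La Lb b - GG a b rho La Lb d)
        by (apply (G_diff_nonneg a b rho La Lb); [exact HH| exact HLa0|..]; unfold d; lra).
      assert (H2 : kap * (d - c) <= GG a b rho La Lb d - GG a b rho La Lb c).
      { destruct (local_est a b rho La Lb HH HLa0) as [L HL].
        apply (tele (GG a b rho La Lb) c d kap L ltac:(unfold c, d; lra)).
        intros u v Hu Huv Hv. specialize (HL u v ltac:(unfold c in Hu; lra) Huv ltac:(unfold d in Hv; lra)).
        pose proof (sig_pos a b rho Lb u HH ltac:(unfold c, d in *; lra)).
        assert (kap * (v - u) <= sig a b rho Lb u * (v - u)) by (apply Rmult_le_compat_r; unfold kap; lra).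
        lra. }
      assert (0 < kap * (d - c)) by (apply Rmult_lt_0_compat; unfold c, d; lra).
      assert (Hs : KK a b * (g_fun rho a a + g_fun rho a b) < CC a b La Lb * I) by lra.
      rewrite <- Heq in Hs.
      replace (KK a b * (g_fun rho a a + g_fun rho a b) / I * I) with (KK a b * (g_fun rho a a + g_fun rho a b)) in Hs by (field; lra).
      lra.
    + intros Hz.
      assert (Hz' : forall t, a < t < b -> rho t = 0) by (intros; apply Hz; lra).
      pose proof (lim_zero_r rho a b La Hab Hz' HLa) as E1.
      pose proof (lim_zero_l rho a b Lb Hab Hz' HLb) as E2.
      subst La Lb.
      assert (Hh : forall x, a <= x <= b -> h_fun rho a x = 0).
      { intros x Hx. unfold h_fun.
        pose proof (mint_int rho a b a x (rho_mono a b rho 0 HH) ltac:(lra) ltac:(lra) ltac:(lra)) as pr.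
        assert (RInt rho a x <= 0 * (x - a)).
        { apply RInt_ub; [lra| exact pr|]. intros u Hu. rewrite Hz' by lra. lra. }
        assert (0 * (x - a) <= RInt rho a x).
        { apply RInt_lb; [lra| exact pr|]. intros u Hu. rewrite Hz' by lra. lra. }
        lra. }
      assert (Hpsi : forall x, a <= x <= b -> psi rho a x = 1).
      { intros x Hx. unfold psi. rewrite Hh by exact Hx. apply exp_0. }
      assert (HIv : I = zeta b - zeta a).
      { unfold I. rewrite (RInt_val _ _ _ (mono_int (f_fun rho a) a b ltac:(lra) (f_mono a b rho 0 HH))).
        apply FTCm.zeta_integral; try lra.
        intros x Hx. unfold f_fun. rewrite Hpsi by lra. ring. }
      unfold g_fun. rewrite !Hpsi by lra. rewrite HIv.
      pose proof (W0_b a b Ha Hab Hb) as HW. unfold W0 in HW.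
      pose proof (zeta_diff a b Ha ltac:(lra) Hb).
      pose proof (zeta_ge2 a ltac:(lra2)). pose proof (zeta_ge2 b ltac:(lra2)).
      assert (0 < zeta b - zeta a).
      { rewrite H. assert (0 < (b - a) * (a + b)) by (apply Rmult_lt_0_compat; lra).
        assert (0 < zeta a * zeta b) by nra.
        assert (0 < (b - a) * (a + b) * (zeta a * zeta b)) by (apply Rmult_lt_0_compat; lra).
        lra. }
      assert (E : KK a b * (a * zeta a * 1 + b * zeta b * 1) = C0 a b * (zeta b - zeta a)) by lra.
      rewrite E. unfold CC. field. lra.
Qed.
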